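(* Let $\Gamma_N\subset\mathbb{Z}^2$ be an $N\times N$ square domain, $N\ge 1$. If $N+1$ is prime, then the sandpile group $G_{\Gamma_N}$ has a cyclic subgroup isomorphic to $\mathbb{Z}/(N+1)\mathbb{Z}$, of order $N+1$.
   Context: An $N\times N$ square domain is a set $\{a,\dots,a+N-1\}\times\{b,\dots,b+N-1\}\subset\mathbb{Z}^2$. For finite $\Gamma\subset\mathbb{Z}^2$, the reduced Laplacian is $(\Delta_\Gamma f)(v)=\sum_{w\in\Gamma,\,w\sim v}f(w)-4f(v)$ (nearest-neighbor adjacency in $\mathbb{Z}^2$; all vertices outside $\Gamma$ are contracted to a sink), and the sandpile group is $G_\Gamma=\mathbb{Z}^\Gamma/\Delta_\Gamma(\mathbb{Z}^\Gamma)$. *)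

(* Defs.v *)
From mathcomp Require Import all_boot all_order all_algebra.
Set Implicit Arguments. Unset Strict Implicit. Unset Printing Implicit Defensive.
Import Order.TTheory GRing.Theory Num.Theory.
Local Open Scope ring_scope.

(* Vertices of the N x N square domain {a..a+N-1} x {b..b+N-1}, indexed by
   'I_N * 'I_N; the vertex (i,j) is the lattice point (a+i, b+j). *)
Definition sqdom (N : nat) := ('I_N * 'I_N)%type.

Definition point (a b : int) (N : nat) (v : sqdom N) : int * int :=
  (a + (v.1 : nat)%:Z, b + (v.2 : nat)%:Z).

Definition z2adj (p q : int * int) : bool :=
  (`|p.1 - q.1| + `|p.2 - q.2| == 1)%R.

(* reduced Laplacian of the square domain (outside vertices contracted to sink) *)
Definition laplacian (a b : int) (N : nat) (f : sqdom N -> int) (v : sqdom N) : int :=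
  \sum_(w : sqdom N | z2adj (point a b w) (point a b v)) f w - 4 * f v.

Definition in_lapl_image (a b : int) (N : nat) (g : sqdom N -> int) : Prop :=
  exists h : sqdom N -> int, forall v, g v = laplacian a b h v.

(* the class of x in G_Gamma = Z^Gamma / Delta(Z^Gamma) has order exactly n,
   i.e. it generates a cyclic subgroup isomorphic to Z/nZ *)
Definition sandpile_class_order (a b : int) (N : nat) (x : sqdom N -> int) (n : nat) : Prop :=
  (0 < n)%N /\ in_lapl_image a b (fun v => x v *+ n) /\
  forall k : nat, (0 < k < n)%N -> ~ in_lapl_image a b (fun v => x v *+ k).

(* Main.v *)
Require Import Defs.
From mathcomp Require Import all_boot all_order all_algebra.
From mathcomp Require Import zify ring lra.
Import Order.TTheory GRing.Theory Num.Theory.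
Set Implicit Arguments. Unset Strict Implicit. Unset Printing Implicit Defensive.
Local Open Scope ring_scope.

Lemma adjE (a b : int) (w1 w2 v1 v2 : nat) :
  (`|(a + w1%:Z) - (a + v1%:Z)| + `|(b+w2%:Z) - (b+v2%:Z)| == 1) =
  [|| ((w1.+1 == v1) && (w2 == v2))%N, ((v1.+1 == w1) && (w2 == v2))%N,
      ((w1 == v1) && (w2.+1 == v2))%N | ((w1 == v1) && (v2.+1 == w2))%N].
Proof.
apply/idP/idP.
- move/eqP => H. lia.
- move=> H; apply/eqP; lia.
Qed.

Definition E n (f : sqdom n.+1 -> int) (i j : nat) : int := f (inord i, inord j).

Lemma S1 n (f : sqdom n.+1 -> int) (i j : nat) :
  \sum_(w : sqdom n.+1 | ((w.1 : nat) == i) && ((w.2 : nat) == j)) f w =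
  if (i < n.+1)%N && (j < n.+1)%N then E f i j else 0.
Proof.
case: ifP => [/andP [hi hj] | h].
- rewrite (big_pred1 (inord i, inord j)) // => w /=.
  case: w => x y /=; rewrite xpair_eqE -!val_eqE /= !inordK //.
- rewrite big_pred0 // => w; apply/negbTE; apply/andP => [[/eqP hi /eqP hj]].
  by move: h; rewrite -hi -hj !ltn_ord.
Qed.

Lemma nbr a b n (f : sqdom n.+1 -> int) (v : sqdom n.+1) :
  \sum_(w | z2adj (point a b w) (point a b v)) f w =
  (if (0 < v.1)%N then E f v.1.-1 v.2 else 0)
  + (if (v.1.+1 < n.+1)%N then E f v.1.+1 v.2 else 0)
  + (if (0 < v.2)%N then E f v.1 v.2.-1 else 0)
  + (if (v.2.+1 < n.+1)%N then E f v.1 v.2.+1 else 0).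
Proof.
rewrite /z2adj /point /=.
under eq_bigl => w do rewrite adjE.
rewrite big_mkcond /=.
rewrite (eq_bigr (fun w : sqdom n.+1 =>
   (if ((w.1 : nat).+1 == v.1) && ((w.2 : nat) == v.2) then f w else 0)
 + (if ((v.1 : nat).+1 == w.1) && ((w.2 : nat) == v.2) then f w else 0)
 + (if ((w.1 : nat) == v.1) && ((w.2 : nat).+1 == v.2) then f w else 0)
 + (if ((w.1 : nat) == v.1) && ((v.2 : nat).+1 == w.2) then f w else 0))); last first.
  move=> w _.
  case E1: (((w.1 : nat).+1 == v.1) && ((w.2 : nat) == v.2));
  case E2: (((v.1 : nat).+1 == w.1) && ((w.2 : nat) == v.2));
  case E3: (((w.1 : nat) == v.1) && ((w.2 : nat).+1 == v.2));
  case E4: (((w.1 : nat) == v.1) && ((v.2 : nat).+1 == w.2)) => /=; lia.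
rewrite !big_split /= -!big_mkcond /=.
case: v => [[v1 hv1] [v2 hv2]] /=.
congr (_ + _ + _ + _).
- case: v1 hv1 => [|k] hk /=.
    by rewrite big_pred0 // => w.
  have := S1 f k v2; rewrite hv2 (ltnW hk) /= => <-.
  by apply: eq_bigl => w; rewrite eqSS.
- have := S1 f v1.+1 v2; rewrite hv2 andbT => <-.
  by apply: eq_bigl => w; rewrite eq_sym.
- case: v2 hv2 => [|k] hk /=.
    by rewrite big_pred0 // => w; rewrite andbF.
  have := S1 f v1 k; rewrite hv1 (ltnW hk) /= => <-.
  by apply: eq_bigl => w; rewrite eqSS.
- have := S1 f v1 v2.+1; rewrite hv1 /= => <-.
  by apply: eq_bigl => w; rewrite [(v2.+1 == _)]eq_sym.
Qed.

Lemma lapL a b n (f g : sqdom n -> int) (c d : int) v :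
  laplacian a b (fun w => c * f w + d * g w) v
  = c * laplacian a b f v + d * laplacian a b g v.
Proof. rewrite /laplacian big_split /= -!mulr_sumr; ring. Qed.

Lemma lapN a b n (f : sqdom n -> int) v :
  laplacian a b (fun w => - f w) v = - laplacian a b f v.
Proof. rewrite /laplacian sumrN; ring. Qed.

Lemma lap0 a b n (g : sqdom n.+1 -> int) :
  (forall v, laplacian a b g v = 0) -> forall v, g v <= 0.
Proof.
move=> H.
case: (@arg_maxP _ _ _ (ord0, ord0) predT g isT) => v0 _ Hv0.
have Hm : forall v, g v <= g v0 by move=> v; exact: (Hv0 v isT).
move=> v; case: (leP (g v0) 0) => [M0 | Mpos].
  exact: le_trans (Hm v) M0.
exfalso.
have B : forall (c : bool) i j, (if c then E g i j else 0) <= g v0.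
  by move=> [] i j //=; [apply: Hm | apply: ltW].
suff: forall i (w : sqdom n.+1), (w.1 : nat) = i -> g w = g v0 -> False.
  by move=> /(_ _ v0 erefl erefl).
elim => [|i IH] w hw hg.
- move: (B (0 < w.1)%N w.1.-1 w.2) (B (w.1.+1 < n.+1)%N w.1.+1 w.2)
        (B (0 < w.2)%N w.1 w.2.-1) (B (w.2.+1 < n.+1)%N w.1 w.2.+1) (H w).
  rewrite /laplacian nbr hg hw /=. lia.
- move: (B (0 < w.1)%N w.1.-1 w.2) (B (w.1.+1 < n.+1)%N w.1.+1 w.2)
        (B (0 < w.2)%N w.1 w.2.-1) (B (w.2.+1 < n.+1)%N w.1 w.2.+1) (H w).
  rewrite /laplacian nbr hg hw /= => h1 h2 h3 h4 h5.
  have hE : E g i w.2 = g v0 by lia.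
  apply: (IH (inord i, inord w.2)) => //=.
  rewrite inordK //; have := ltn_ord w.1; rewrite hw; lia.
Qed.

Definition hh n (w : sqdom n) : int := ((w.1 : nat).+1 * (w.2 : nat).+1)%N%:Z.

Definition xx n (v : sqdom n) : int :=
  - (((if (v.1 : nat) == n.-1 then (v.2 : nat).+1 else 0)
     + (if (v.2 : nat) == n.-1 then (v.1 : nat).+1 else 0))%N)%:Z.

Lemma lapH a b n (v : sqdom n.+1) : xx v *+ n.+2 = laplacian a b (@hh n.+1) v.
Proof.
rewrite /laplacian nbr /xx /hh /E /=.
case: v => [[v1 hv1] [v2 hv2]] /=.
have L : (if (0 < v1)%N then ((@inord n v1.-1).+1 * (@inord n v2).+1)%N%:Z else 0)
   = (v1 * v2.+1)%N%:Z.
  case hv: v1 => [|k] //=; rewrite hv in hv1. rewrite ?inordK //; lia.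
have D : (if (0 < v2)%N then ((@inord n v1).+1 * (@inord n v2.-1).+1)%N%:Z else 0)
   = (v1.+1 * v2)%N%:Z.
  case hv: v2 => [|k] //=; rewrite hv in hv2; rewrite ?inordK //; lia.
have R : (if (v1.+1 < n.+1)%N then ((@inord n v1.+1).+1 * (@inord n v2).+1)%N%:Z else 0)
   = if v1 == n then 0 else (v1.+2 * v2.+1)%N%:Z.
  case: eqP => [->|ne]; first by rewrite ltnn.
  have h : (v1.+1 < n.+1)%N by lia.
  by rewrite h !inordK.
have U : (if (v2.+1 < n.+1)%N then ((@inord n v1).+1 * (@inord n v2.+1).+1)%N%:Z else 0)
   = if v2 == n then 0 else (v1.+1 * v2.+2)%N%:Z.
  case: eqP => [->|ne]; first by rewrite ltnn.
  have h : (v2.+1 < n.+1)%N by lia.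
  by rewrite h !inordK.
rewrite L D R U.
case: eqP => [->|n1]; case: eqP => [->|n2] /=; lia.
Qed.

Theorem lemma4 (N : nat) (a b : int) :
  (1 <= N)%N -> prime N.+1 ->
  exists x : sqdom N -> int, sandpile_class_order a b x N.+1.
Proof.
case: N => [//|n] _ _.
exists (@xx n.+1); split => //; split.
  by exists (@hh n.+1) => v; apply: lapH.
move=> k /andP [k0 kp] [g Hg].
pose d := fun w => (n.+2)%:Z * g w + (- k%:Z) * @hh n.+1 w.
have Z : forall v, laplacian a b d v = 0.
  move=> v; rewrite /d lapL -Hg -lapH; lia.
have Z' : forall v, laplacian a b (fun w => - d w) v = 0.
  by move=> v; rewrite lapN Z oppr0.
have h1 := lap0 Z (ord0, ord0).
have h2 := lap0 Z' (ord0, ord0).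
move: h1 h2; rewrite /d /hh /=.
move: (g (ord0, ord0)) => g0; clear Z Z' Hg d.
move=> h1 h2; have e : (n.+2)%:Z * g0 = k%:Z by lia.
case: (lerP g0 0) => hg.
  have : (n.+2)%:Z * g0 <= 0 by rewrite pmulr_rle0.
  lia.
have : (n.+2)%:Z * 1 <= (n.+2)%:Z * g0 by rewrite ler_pM2l.
lia.
Qed.
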